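(* Let $p$ be an odd prime, $K$ a finite extension of $\mathbb{Q}_p$, and $K\subset K'\subset M\subset F$ finite extensions with $F/K$ Galois and $M/K'$ Galois. Let $E$ be a finite Galois extension of $\mathbb{Q}_p$ with $F\subset E$, let $\chi:\mathrm{Gal}(M/K')\to E^{\times}$ be a character, and put $m=[K':K]$. Then there exist $x_1,\dots,x_m\in M\otimes_K E$ such that: (i) for $x\in M\otimes_K E$, one has $gx=(1\otimes\chi(g)^{-1})x$ for all $g\in\mathrm{Gal}(M/K')$ if and only if $x=\sum_{i=1}^m(1\otimes a_i)x_i$ for some $a_1,\dots,a_m\in E$; (ii) for $a_1,\dots,a_m\in E$, one has $\sum_{i=1}^m(1\otimes a_i)x_i\in(M\otimes_K E)^{\times}$ if and only if $a_i\neq0$ for all $i$.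
   Context: $\mathrm{Gal}(M/K')$ acts on $M\otimes_K E$ through the first tensor factor; $K$ acts on $E$ via the natural inclusion $K\subset E$. *)

(* Defs.v *)
From HB Require Import structures.
From mathcomp Require Import all_boot all_order all_algebra all_fingroup all_field.
Set Implicit Arguments. Unset Strict Implicit. Unset Printing Implicit Defensive.
Import GRing.Theory.
Local Open Scope ring_scope.

(* Model of the base change  M (x)_K E, where the base field K is the ground
   field of L : splittingFieldType K and M, E : {subfield L}.
   Using the K-basis b := vbasis M of M, an element  sum_i b_i (x) e_i  of
   M (x)_K E is represented by the row vector (e_i)_i; it belongs to
   M (x)_K E iff every e_i lies in E. *)
Section Tensor.
Variables (K : fieldType) (L : splittingFieldType K) (M E : {subfield L}).

Definition tens := 'rV[L]_(\dim M).

Local Notation b := (vbasis M).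

Definition in_tens (x : tens) : Prop := forall i, x 0 i \in E.

(* multiplication: (b_i (x) e)(b_j (x) f) = b_i b_j (x) e f,
   with b_i b_j = sum_k c_ijk b_k, c_ijk in K *)
Definition tmul (x y : tens) : tens :=
  \row_k \sum_(i < \dim M) \sum_(j < \dim M)
     coord b k (b`_i * b`_j) *: (x 0 i * y 0 j).

(* 1 (x) a  =  sum_k b_k (x) (coord_k(1) a) *)
Definition tpure (a : L) : tens := \row_k (coord b k 1 *: a).

Definition tone : tens := tpure 1.

Definition tunit (x : tens) : Prop :=
  exists2 y, in_tens y & tmul x y = tone /\ tmul y x = tone.

(* action of g in Gal(M/.) on the first tensor factor:
   g (sum_i b_i (x) e_i) = sum_i g(b_i) (x) e_i *)
Definition galact (g : gal_of M) (x : tens) : tens :=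
  \row_k \sum_(i < \dim M) coord b k (g b`_i) *: x 0 i.

End Tensor.

(* Main.v *)
Require Import Defs.
From HB Require Import structures.
From mathcomp Require Import all_boot all_order all_algebra all_fingroup all_field.
Import GRing.Theory.
Local Open Scope ring_scope.
Set Implicit Arguments. Unset Strict Implicit. Unset Printing Implicit Defensive.

Section Phi.
Variables (K : fieldType) (L : splittingFieldType K) (M F E : {subfield L}).
Hypotheses (sMF : (M <= F)%VS) (sFE : (F <= E)%VS).

Local Notation b := (vbasis M).

Definition phi (t : gal_of F) (x : tens M) : L :=
  \sum_(i < \dim M) t b`_i * x 0 i.

Lemma b_in i : b`_i \in M.
Proof.
have [lt|ge] := ltnP i (size b).
  by apply: vbasis_mem; apply: mem_nth.
by rewrite nth_default // mem0v.
Qed.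

Lemma b_inF i : b`_i \in F.
Proof. exact: subvP sMF _ (b_in i). Qed.

Lemma phi_lin (t : gal_of F) (a : L) : a \in M ->
  t a = \sum_(k < \dim M) coord b k a *: t b`_k.
Proof. by move=> Ma; rewrite {1}(coord_vbasis Ma) linear_sum; apply: eq_bigr => k _; rewrite linearZ. Qed.

Lemma phi_tmul t x y : phi t (tmul x y) = phi t x * phi t y.
Proof.
rewrite /phi /tmul mulr_suml.
under eq_bigr => k _ do rewrite mxE mulr_sumr.
rewrite exchange_big; apply: eq_bigr => i _.
under eq_bigr => k _ do rewrite mulr_sumr.
rewrite exchange_big mulr_sumr; apply: eq_bigr => j _ /=.
under eq_bigr => k _ do rewrite -scalerAr scalerAl.
rewrite -mulr_suml -phi_lin ?rmorphM; last by rewrite rpredM ?b_in.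
by rewrite mulrACA.
Qed.

Lemma phi_tpure t a : phi t (tpure M a) = a.
Proof.
rewrite /phi /tpure; under eq_bigr => k _ do rewrite mxE -scalerAr scalerAl.
by rewrite -mulr_suml -phi_lin ?mem1v // rmorph1 mul1r.
Qed.

Lemma phiD t x y : phi t (x + y) = phi t x + phi t y.
Proof. by rewrite /phi -big_split; apply: eq_bigr => i _; rewrite !mxE mulrDr. Qed.

Lemma phiB t x y : phi t (x - y) = phi t x - phi t y.
Proof. by rewrite /phi -sumrB; apply: eq_bigr => i _; rewrite !mxE mulrBr. Qed.

Lemma phi_sum t (I : finType) (f : I -> tens M) :
  phi t (\sum_i f i) = \sum_i phi t (f i).
Proof.
rewrite /phi exchange_big; apply: eq_bigr => k _.
by rewrite summxE mulr_sumr.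
Qed.

Lemma phi_galact t (g : gal_of M) (h : gal_of F) x :
  (forall a, a \in M -> h a = g a) -> phi t (galact g x) = phi (h * t)%g x.
Proof.
move=> hg; rewrite /phi /galact.
under eq_bigr => k _ do rewrite mxE mulr_sumr.
rewrite exchange_big; apply: eq_bigr => i _ /=.
under eq_bigr => k _ do rewrite -scalerAr scalerAl.
rewrite -mulr_suml -phi_lin ?memv_gal ?b_in //.
by rewrite galM ?b_inF // hg ?b_in.
Qed.

Lemma phi_in t x : in_tens E x -> phi t x \in E.
Proof.
move=> Ex; apply: rpred_sum => i _; apply: rpredM => //.
by apply: (subvP sFE); apply: memv_gal; apply: b_inF.
Qed.

Lemma tpure_in a : a \in E -> in_tens E (tpure M a).
Proof. by move=> Ea i; rewrite mxE memvZ. Qed.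

Lemma tmul_in (x y : tens M) : in_tens E x -> in_tens E y -> in_tens E (tmul x y).
Proof.
move=> Ex Ey k; rewrite mxE; apply: rpred_sum => i _; apply: rpred_sum => j _.
by rewrite memvZ // rpredM.
Qed.

Lemma sum_in (I : finType) (f : I -> tens M) :
  (forall i, in_tens E (f i)) -> in_tens E (\sum_i f i).
Proof. by move=> Ef k; rewrite summxE; apply: rpred_sum => i _; apply: Ef. Qed.

End Phi.
Section Ded.
Variables (K : fieldType) (L : splittingFieldType K) (M : {subfield L}).

Lemma hom_indep_contra (I : finType) (s : I -> 'AEnd(L)) (P : pred I) (c_ : I -> L) x :
    (forall y z, y != z -> exists2 a, a \in M & s y a != s z a) ->
    P x -> c_ x != 0 ->
  exists2 a, a \in M & \sum_(y | P y) c_ y * s y a != 0.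
Proof.
move=> dist.
have [n] := ubnP #|P|; elim: n c_ x P => // n IHn c_ x P lePn Px nz_cx.
rewrite ltnS (cardD1x Px) in lePn; move/IHn: lePn => {n IHn}/=IH_P.
have [/eqfun_inP c_Px'_0 | ] := boolP [forall (y | P y && (y != x)), c_ y == 0].
  exists 1; rewrite ?mem1v // (bigD1 x Px) /= rmorph1 mulr1.
  by rewrite big1 ?addr0 // => y /c_Px'_0->; rewrite mul0r.
case/forall_inPn => y Px'y nz_cy.
have [Py yx] := andP Px'y.
have [a Ea nz_yxa] := dist _ _ yx.
pose d_ y := c_ y * (s y a - s x a).
have /IH_P[//|b Eb nz_sumb]: d_ y != 0 by rewrite mulf_neq0 ?subr_eq0.
have [sumb_0|] := eqVneq (\sum_(z | P z) c_ z * s z b) 0; last by exists b.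
exists (a * b); first exact: rpredM.
rewrite -subr_eq0 -[z in _ - z](mulr0 (s x a)) -[in z in _ - z]sumb_0.
rewrite mulr_sumr -sumrB (bigD1 x Px) rmorphM /= mulrCA subrr add0r.
congr (_ != 0): nz_sumb; apply: eq_bigr => z _.
by rewrite mulrCA rmorphM -mulrBr -mulrBl mulrA.
Qed.

Lemma hom_indep (I : finType) (s : I -> 'AEnd(L)) (c_ : I -> L) :
    (forall y z, y != z -> exists2 a, a \in M & s y a != s z a) ->
    (forall a, a \in M -> \sum_y c_ y * s y a = 0) -> forall y, c_ y = 0.
Proof.
move=> dist sum0 x; apply/eqP/idPn=> /(@hom_indep_contra _ s predT _ x dist isT)[a Ea].
by rewrite sum0 ?eqxx.
Qed.

End Ded.

Section Reps.
Variables (K : fieldType) (L : splittingFieldType K) (F : {subfield L}).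
Hypothesis galF : galois 1 F.

Lemma card_reps (X : {subfield L}) : (X <= F)%VS ->
  #|rcosets 'Gal(F / X) 'Gal(F / 1)|%g = \dim X.
Proof.
move=> sXF.
have sHG := galS F (sub1v X).
have galXF : galois X F by apply: galoisS galF; rewrite sub1v sXF.
have eG := galois_dim galF; have eH := galois_dim galXF.
rewrite dimv1 divn1 in eG.
have L1 := Lagrange sHG; have e2 := dim_sup_field sXF.
rewrite -eH -eG in L1.
have dpos : (0 < \dim_X F)%N by rewrite eH cardG_gt0.
move: L1 e2 dpos; set d := \dim_X F => L1 e2 dpos.
rewrite e2 in L1; move/eqP: L1; rewrite eqn_pmul2l //; move/eqP.
done.
Qed.

Lemma reps (X : {subfield L}) : (X <= F)%VS ->
  exists rho : 'I_(\dim X) -> gal_of F,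
  [/\ forall j, rho j \in 'Gal(F / 1)%g,
      forall t, t \in 'Gal(F / 1)%g -> exists j, t \in ('Gal(F / X) :* rho j)%g &
      forall t j j', t \in ('Gal(F / X) :* rho j)%g -> t \in ('Gal(F / X) :* rho j')%g -> j = j'].
Proof.
move=> sXF; have ce := @card_reps X sXF.
set H := 'Gal(F / X)%G; set G := 'Gal(F / 1)%G.
have sHG : H \subset G := galS F (sub1v X).
pose C (j : 'I_(\dim X)) := enum_val (cast_ord (esym ce) j).
have CP j : exists2 x, x \in G & C j = (H :* x)%g.
  by apply/rcosetsP; apply: enum_valP.
pose rho j := repr (C j).
have rhoC j : rho j \in C j.
  by rewrite /rho; have [x _ ->] := CP j; apply: mem_repr_rcoset.
have Crho j : C j = (H :* rho j)%g.
  have [x _ Cx] := CP j; move: (rhoC j); rewrite Cx => r.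
  by apply/esym/rcoset_eqP.
exists rho; split.
- move=> j; have [x Gx Cx] := CP j; move: (rhoC j); rewrite Cx.
  by case/rcosetP => h Hh ->; rewrite groupM // (subsetP sHG).
- move=> t Gt.
  have Ct : (H :* t)%g \in rcosets H G by apply/rcosetsP; exists t.
  pose j := cast_ord ce (enum_rank_in Ct (H :* t)%g).
  exists j; rewrite -Crho /C /j cast_ordK enum_rankK_in //.
  exact: rcoset_refl.
- move=> t j j'; rewrite -!Crho => tj tj'.
  suff : C j = C j'.
    by move/enum_val_inj/(congr1 (cast_ord ce)); rewrite !cast_ordKV.
  have [x _ Cx] := CP j; have [x' _ Cx'] := CP j'.
  rewrite Cx Cx'; rewrite Cx in tj; rewrite Cx' in tj'.
  by rewrite -(rcoset_eqP tj) (rcoset_eqP tj').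
Qed.

End Reps.

Section Mat.
Variables (K : fieldType) (L : splittingFieldType K) (M F E : {subfield L}).
Hypotheses (sMF : (M <= F)%VS) (sFE : (F <= E)%VS).
Local Notation b := (vbasis M).
Local Notation G := 'Gal(F / 1)%g.
Local Notation H := 'Gal(F / M)%g.
Variable sigma : 'I_(\dim M) -> gal_of F.
Hypotheses (sG : forall j, sigma j \in G)
  (sCov : forall t, t \in G -> exists j, t \in (H :* sigma j)%g)
  (sInj : forall t j j', t \in (H :* sigma j)%g -> t \in (H :* sigma j')%g -> j = j').

Lemma sdist j j' : j != j' -> exists2 a, a \in M & sigma j a != sigma j' a.
Proof.
move=> njj.
have [/existsP[i ni]|/existsPn alleq] := boolP [exists i : 'I_(\dim M), sigma j b`_i != sigma j' b`_i].
  by exists b`_i => //; apply: b_in.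
case/negP: njj; apply/eqP; apply: (@sInj (sigma j) j j'); first exact: rcoset_refl.
rewrite mem_rcoset gal_kHom //; apply/kAHomP => a Ma.
have Fa : a \in F by apply: (subvP sMF).
have eqa : sigma j a = sigma j' a.
  rewrite (phi_lin _ Ma) (phi_lin _ Ma); apply: eq_bigr => k _.
  by move: (alleq k); rewrite negbK => /eqP->.
by rewrite galM // eqa -galM // mulgV gal_id.
Qed.

Definition Bm : 'M[L]_(\dim M) := \matrix_(i, j) sigma j b`_i.

Lemma Bm_unit : Bm \in unitmx.
Proof.
rewrite unitmxE unitfE -det_tr; apply/negP => /det0P [v nzv vB0].
case/negP: nzv; apply/eqP/rowP => j; rewrite mxE.
apply: (@hom_indep _ _ M _ (fun j => gal_repr (sigma j)) (fun j => v 0 j)) => //.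
  exact: sdist.
move=> a Ma.
under eq_bigr => k _ do rewrite (phi_lin _ Ma) mulr_sumr.
rewrite exchange_big big1 // => i _.
under eq_bigr => k _ do rewrite -scalerAr.
rewrite -scaler_sumr.
have : (v *m Bm^T) 0 i = 0 by rewrite vB0 mxE.
rewrite mxE => e.
suff -> : \sum_j v 0 j * sigma j b`_i = 0 by rewrite scaler0.
by apply: (etrans _ e); apply: eq_bigr => k _; rewrite !mxE.
Qed.

Lemma phiBm (x : tens M) j : (x *m Bm) 0 j = phi (sigma j) x.
Proof. by rewrite mxE /phi; apply: eq_bigr => i _; rewrite mxE mulrC. Qed.

Lemma phi_H h t (x : tens M) : h \in H -> phi (h * t)%g x = phi t x.
Proof.
move=> Hh; rewrite /phi; apply: eq_bigr => i _.
by rewrite galM ?(b_inF sMF) // (fixed_gal sMF Hh (b_in M i)).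
Qed.

Lemma phi_inj (x y : tens M) : (forall t, t \in G -> phi t x = phi t y) -> x = y.
Proof.
move=> e; apply/eqP; rewrite -subr_eq0; apply/eqP.
rewrite -[x - y](mulmxK Bm_unit).
have -> : (x - y) *m Bm = 0.
  by apply/rowP => j; rewrite phiBm phiB e // subrr mxE.
by rewrite mul0mx.
Qed.

Lemma solve (f : gal_of F -> L) :
  (forall t, t \in G -> f t \in E) ->
  (forall h t, h \in H -> t \in G -> f (h * t)%g = f t) ->
  exists x : tens M, in_tens E x /\ forall t, t \in G -> phi t x = f t.
Proof.
move=> fE fH; pose w := \row_j f (sigma j).
exists (w *m invmx Bm); split.
  move=> i; rewrite mxE; apply: rpred_sum => j _; apply: rpredM.
    by rewrite mxE fE.
  have EB k l : Bm k l \in E.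
    by rewrite mxE; apply: (subvP sFE); apply: memv_gal; apply: (b_inF sMF).
  have Edet n (N : 'M_n) (E_N : forall i j, N i j \in E): \det N \in E.
    by apply: rpred_sum => s _; rewrite rpredMsign rpred_prod.
  rewrite /invmx Bm_unit 2!mxE mulrC rpred_div ?Edet //.
  by rewrite rpredMsign Edet // => k l; rewrite 2!mxE.
move=> t Gt; have [j tj] := sCov Gt.
move: tj; rewrite mem_rcoset => Hk.
rewrite -(mulgKV (sigma j) t) phi_H // fH ?sG //.
by rewrite -phiBm mulmxKV ?Bm_unit // mxE.
Qed.

Lemma tunitP (x : tens M) : in_tens E x ->
  (tunit E x <-> forall t, t \in G -> phi t x != 0).
Proof.
move=> Ex; split.
  case=> y Ey [xy _] t Gt; apply/eqP => x0.
  have := phi_tmul t x y; rewrite xy /tone phi_tpure x0 mul0r.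
  by apply/eqP; exact: oner_neq0.
move=> nz.
have [|h t Hh Gt|y [Ey hy]] := @solve (fun t => (phi t x)^-1).
- by move=> t Gt; rewrite rpredV; apply: phi_in.
- by rewrite /= phi_H.
exists y => //; split; apply: phi_inj => t Gt;
  by rewrite phi_tmul /tone phi_tpure hy // ?mulfV ?mulVf //; exact: nz.
Qed.

End Mat.

Section Main.
Variables (K : fieldType) (L : splittingFieldType K) (K' M F E : {subfield L})
  (chi : gal_of M -> L).
Hypotheses (sK'M : (K' <= M)%VS) (sMF : (M <= F)%VS) (sFE : (F <= E)%VS)
  (galF : galois 1 F) (galM : galois K' M).
Hypothesis chiE : forall g, g \in 'Gal(M / K')%g -> chi g \in E /\ chi g != 0.
Hypothesis chiM : forall g h, g \in 'Gal(M / K')%g -> h \in 'Gal(M / K')%g ->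
     chi (g * h)%g = chi g * chi h.
Local Notation G := 'Gal(F / 1)%g.
Local Notation H := 'Gal(F / M)%g.
Local Notation H' := 'Gal(F / K')%g.
Variable sigma : 'I_(\dim M) -> gal_of F.
Hypotheses (sG : forall j, sigma j \in G)
  (sCov : forall t, t \in G -> exists j, t \in (H :* sigma j)%g)
  (sInj : forall t j j', t \in (H :* sigma j)%g -> t \in (H :* sigma j')%g -> j = j').
Variable rho : 'I_(\dim K') -> gal_of F.
Hypotheses (rG : forall j, rho j \in G)
  (rCov : forall t, t \in G -> exists j, t \in (H' :* rho j)%g)
  (rInj : forall t j j', t \in (H' :* rho j)%g -> t \in (H' :* rho j')%g -> j = j').

Let sKMF : (K' <= M <= F)%VS. Proof. by rewrite sK'M sMF. Qed.
Let nKM : normalField K' M. Proof. by case/and3P: galM. Qed.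
Let galKF : galois K' F.
Proof. by apply: galoisS galF; rewrite sub1v (subv_trans sK'M sMF). Qed.
Local Notation cast := (normalField_cast (E:=F) M).

Let cast_eq h a : h \in H' -> a \in M -> cast h a = h a.
Proof. by move=> Hh Ma; rewrite (normalField_cast_eq sKMF nKM Hh Ma). Qed.

Let cast_in h : h \in H' -> cast h \in 'Gal(M / K')%g.
Proof.
move=> Hh; rewrite -(normalField_img galKF sKMF nKM).
exact: (mem_morphim (normalField_cast_morphism sKMF nKM)).
Qed.

Let castM h k : h \in H' -> k \in H' -> cast (h * k)%g = (cast h * cast k)%g.
Proof. exact: normalField_castM. Qed.

Let cast_surj g : g \in 'Gal(M / K')%g -> exists2 h, h \in H' & g = cast h.
Proof.
by rewrite -(normalField_img galKF sKMF nKM) => /morphimP [h _ Hh ->]; exists h.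
Qed.

Let cast_ker h : h \in H -> cast h = 1%g.
Proof.
move=> Hh; apply: (mker (f := normalField_cast_morphism sKMF nKM)).
by rewrite normalField_ker.
Qed.

Let HH' : H \subset H'. Proof. exact: galS. Qed.
Let H'G : H' \subset G. Proof. exact: galS (sub1v _). Qed.

Let chi1 : chi 1%g = 1.
Proof.
have nz := (chiE (group1 'Gal(M / K')%G)).2.
have := chiM (group1 'Gal(M / K')%G) (group1 'Gal(M / K')%G).
rewrite mulg1 => e; apply: (mulfI nz); by rewrite mulr1 -e.
Qed.

Let inj := phi_inj sMF sG sInj.

Lemma eigenP (x : tens M) :
  (forall g, g \in 'Gal(M / K')%g -> galact g x = tmul (tpure M (chi g)^-1) x) <->
  (forall h t, h \in H' -> t \in G -> phi (h * t)%g x = (chi (cast h))^-1 * phi t x).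
Proof.
split.
  move=> ex h t Hh Gt.
  have hg : forall a, a \in M -> h a = cast h a by move=> a Ma; rewrite cast_eq.
  by rewrite -(phi_galact sMF t x hg) ex ?cast_in // phi_tmul phi_tpure.
move=> eh g Gg; have [h Hh ->] := cast_surj Gg.
apply: inj => t Gt.
have hg : forall a, a \in M -> h a = cast h a by move=> a Ma; rewrite cast_eq.
by rewrite (phi_galact sMF t x hg) eh // phi_tmul phi_tpure.
Qed.

Definition fi j (t : gal_of F) : L :=
  if t \in (H' :* rho j)%g then (chi (cast (t * (rho j)^-1)%g))^-1 else 0.

Lemma fi_eig j h t : h \in H' -> fi j (h * t)%g = (chi (cast h))^-1 * fi j t.
Proof.
move=> Hh; rewrite /fi !mem_rcoset -mulgA groupMl //.
case: ifP => tj; last by rewrite mulr0.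
by rewrite castM // chiM ?cast_in // invfM.
Qed.

Lemma fi_E j t : fi j t \in E.
Proof.
rewrite /fi; case: ifP => tj; last exact: mem0v.
by rewrite rpredV; apply: (chiE _).1; apply: cast_in; rewrite -mem_rcoset.
Qed.

Lemma fi_H j h t : h \in H -> fi j (h * t)%g = fi j t.
Proof.
move=> Hh; rewrite fi_eig ?(subsetP HH') // cast_ker // chi1 invr1 mul1r.
by [].
Qed.

Lemma fi_other j j' t : t \in (H' :* rho j')%g -> j != j' -> fi j t = 0.
Proof.
move=> tj' njj; rewrite /fi; case: ifP => // tj.
by move: njj; rewrite (rInj tj tj') eqxx.
Qed.

Lemma fi_self j t : t \in (H' :* rho j)%g ->
  fi j t = (chi (cast (t * (rho j)^-1)%g))^-1.
Proof. by rewrite /fi => ->. Qed.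

Lemma main_part :
  exists xs : 'I_(\dim K') -> tens M,
    (forall i, in_tens E (xs i)) /\
    (forall x : tens M, in_tens E x ->
       ((forall g, g \in 'Gal(M / K')%g ->
            galact g x = tmul (tpure M (chi g)^-1) x) <->
        exists2 a : 'I_(\dim K') -> L, (forall i, a i \in E) &
          x = \sum_(i < \dim K') tmul (tpure M (a i)) (xs i))) /\
    (forall a : 'I_(\dim K') -> L, (forall i, a i \in E) ->
       (tunit E (\sum_(i < \dim K') tmul (tpure M (a i)) (xs i)) <->
        forall i, a i != 0)).
Proof.
have /fin_all_exists [xs hxs] : forall j, exists x : tens M,
    in_tens E x /\ forall t, t \in G -> phi t x = fi j t.
  move=> j; apply: (solve sMF sFE sG sCov sInj); first by move=> t _; apply: fi_E.
  by move=> h t Hh _; apply: fi_H.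
have val (a : 'I_(\dim K') -> L) t j0 : t \in G -> t \in (H' :* rho j0)%g ->
    phi t (\sum_(i < \dim K') tmul (tpure M (a i)) (xs i)) = a j0 * fi j0 t.
  move=> Gt tj0; rewrite phi_sum (bigD1 j0) //= big1 ?addr0.
    by rewrite phi_tmul phi_tpure (hxs j0).2.
  move=> i ni; rewrite phi_tmul phi_tpure (hxs i).2 // (fi_other tj0 ni).
  by rewrite mulr0.
exists xs; split; first by move=> i; exact: (hxs i).1.
split.
  move=> x Ex; split.
    move/eigenP=> eh; exists (fun j => phi (rho j) x).
      by move=> j; apply: phi_in.
    apply: inj => t Gt; have [j0 tj0] := rCov Gt.
    rewrite (val _ _ j0) // fi_self //.
    have Hk : (t * (rho j0)^-1)%g \in H' by rewrite -mem_rcoset.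
    by rewrite -{1}(mulgKV (rho j0) t) eh // mulrC.
  case=> a Ea ->; apply/eigenP => h t Hh Gt.
  have [j0 tj0] := rCov Gt.
  have htj0 : (h * t)%g \in (H' :* rho j0)%g by rewrite mem_rcoset -mulgA groupMl // -mem_rcoset.
  have Ght : (h * t)%g \in G by rewrite groupM // (subsetP H'G).
  rewrite (val a (h * t)%g j0) // (val a t j0) // fi_eig //.
  by rewrite mulrCA.
move=> a Ea.
have hE : in_tens E (\sum_(i < \dim K') tmul (tpure M (a i)) (xs i)).
  by apply: sum_in => i; apply: tmul_in; [apply: tpure_in | exact: (hxs i).1].
have U := tunitP sMF sFE sG sCov sInj hE.
split.
  move/U=> nz j; have := nz _ (rG j); rewrite (val a (rho j) j) ?rG ?rcoset_refl //.
  by rewrite fi_self ?rcoset_refl // mulgV cast_ker ?group1 // chi1 invr1 mulr1.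
move=> nz; apply/U => t Gt; have [j0 tj0] := rCov Gt.
rewrite (val a t j0) // fi_self // mulf_neq0 // invr_eq0.
apply: (chiE _).2; apply: cast_in; by rewrite -mem_rcoset.
Qed.

End Main.

Theorem mainTheorem2 (K : fieldType) (L : splittingFieldType K)
    (K' M F E : {subfield L}) (chi : gal_of M -> L) :
  (K' <= M)%VS -> (M <= F)%VS -> (F <= E)%VS ->
  galois 1 F -> galois K' M ->
  (forall g, g \in 'Gal(M / K')%g -> chi g \in E /\ chi g != 0) ->
  (forall g h, g \in 'Gal(M / K')%g -> h \in 'Gal(M / K')%g ->
     chi (g * h)%g = chi g * chi h) ->
  exists xs : 'I_(\dim K') -> tens M,
    (forall i, in_tens E (xs i)) /\
    (forall x : tens M, in_tens E x ->
       ((forall g, g \in 'Gal(M / K')%g ->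
            galact g x = tmul (tpure M (chi g)^-1) x) <->
        exists2 a : 'I_(\dim K') -> L, (forall i, a i \in E) &
          x = \sum_(i < \dim K') tmul (tpure M (a i)) (xs i))) /\
    (forall a : 'I_(\dim K') -> L, (forall i, a i \in E) ->
       (tunit E (\sum_(i < \dim K') tmul (tpure M (a i)) (xs i)) <->
        forall i, a i != 0)).
Proof.
move=> sK'M sMF sFE galF galM chiE chiM.
have [sigma [sG sCov sInj]] := reps galF sMF.
have [rho [rG rCov rInj]] := reps galF (subv_trans sK'M sMF).
exact: (main_part sK'M sMF sFE galF galM chiE chiM sG sCov sInj rG rCov rInj).
Qed.
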